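(* Let $N\ge 2$ and let $G$ be a connected oriented trivalent graph with $v$ vertices. Then $W_{sl(N)}(G)$, regarded as a function of $N$, is a polynomial in $N$ of degree at most $\frac{v}{2}+2$. (Consequently one may define $W_{sl(N)}^{\text{top}}(G)$ to be the coefficient of $N^{\frac{v}{2}+2}$ in this polynomial.)
   Context: An oriented trivalent graph is a finite graph (multiple edges and loops allowed) in which every vertex has degree 3, together with a cyclic ordering, at each vertex, of the three half-edges emanating from it. For a finite-dimensional metrized Lie algebra $L$ (a Lie algebra with an ad-invariant symmetric non-degenerate bilinear form $\langle\cdot,\cdot\rangle$), choose a basis $\{L_a\}_{a=1}^{\dim L}$, let $t_{ab}=\langle L_a,L_b\rangle$, let $(t^{ab})$ be the inverse matrix of $(t_{ab})$, and let $f_{abc}=\langle L_a,[L_b,L_c]\rangle$. For an oriented trivalent graph $G$, $W_L(G)$ is defined as follows: assign an index in $\{1,\dots,\dim L\}$ to every half-edge of $G$ and sum, over all such assignments, the product over all vertices of $f_{abc}$ (where $a,b,c$ are the indices on the three half-edges at that vertex read in their cyclic order) times the product over all edges of $t^{ab}$ (where $a,b$ are the indices on the two half-edges forming that edge). This is independent of the choice of basis. For $L=sl(N)$ the metric is the matrix trace in the defining representation: $\langle X,Y\rangle=\operatorname{tr}(XY)$. *)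

(* Defs.v *)
From HB Require Import structures.
From mathcomp Require Import all_boot all_order all_algebra.
Set Implicit Arguments. Unset Strict Implicit. Unset Printing Implicit Defensive.
Import Order.TTheory GRing.Theory Num.Theory.
Local Open Scope ring_scope.

(* ---------- Oriented trivalent graphs ----------
   A graph with v vertices has half-edge set  'I_v * 'I_3 : the half-edges
   at vertex x are (x,0), (x,1), (x,2), in this cyclic order (this encodes
   the orientation).  The edges are given by a fixed-point-free involution
   [e] on half-edges: {h, e h} is an edge.  Loops and multiple edges are
   allowed. *)
Definition halfedge (v : nat) := ('I_v * 'I_3)%type.

Definition he0 : 'I_3 := inord 0.
Definition he1 : 'I_3 := inord 1.
Definition he2 : 'I_3 := inord 2.

Definition is_oriented_trivalent (v : nat) (e : halfedge v -> halfedge v) :=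
  involutive e /\ (forall h, e h != h).

Definition tg_adj (v : nat) (e : halfedge v -> halfedge v) : rel 'I_v :=
  fun x y => [exists i : 'I_3, exists j : 'I_3, e (x, i) == (y, j)].

Definition tg_connected (v : nat) (e : halfedge v -> halfedge v) :=
  forall x y : 'I_v, connect (tg_adj e) x y.

Section Weight.
Variables (n : nat) (I : finType) (B : I -> 'M[rat]_n).

Definition metric (a b : I) : rat := \tr (B a *m B b).

Definition gram : 'M[rat]_#|I| :=
  \matrix_(a, b) metric (enum_val a) (enum_val b).

Definition tinv (a b : I) : rat := invmx gram (enum_rank a) (enum_rank b).

Definition fstruct (a b c : I) : rat :=
  \tr (B a *m (B b *m B c - B c *m B b)).

(* W_L(G): sum over all index assignments on half-edges; each edge {h, e h}
   contributes once (we take the half-edge with smaller rank). *)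
Definition Wweight (v : nat) (e : halfedge v -> halfedge v) : rat :=
  \sum_(phi : {ffun halfedge v -> I})
    (\prod_(x : 'I_v) fstruct (phi (x, he0)) (phi (x, he1)) (phi (x, he2))) *
    (\prod_(h : halfedge v | (enum_rank h < enum_rank (e h))%N)
        tinv (phi h) (phi (e h))).
End Weight.

(* ---------- sl(N) with its standard basis over Q ----------
   Basis indexed by pairs (i,j) in 'I_N * 'I_N other than (N-1,N-1):
   (i,j), i <> j   |->  E_ij
   (i,i), i < N-1  |->  E_ii - E_{N-1,N-1}                                 *)
Definition slidx (N : nat) :=
  {x : 'I_N * 'I_N | (val x.1 != N.-1)%N || (val x.2 != N.-1)%N}.

Definition slbasis (N : nat) (x : slidx N) : 'M[rat]_N :=
  let i := (val x).1 in let j := (val x).2 in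
  \matrix_(k, l)
    if i != j then ((k == i) && (l == j))%:R
    else ((k == l) && (k == i))%:R - ((k == l) && (val k == N.-1)%N)%:R.

Definition W_sl (N : nat) (v : nat) (e : halfedge v -> halfedge v) : rat :=
  Wweight (@slbasis N) e.

(* Main.v *)
Require Import Defs.
From HB Require Import structures.
From mathcomp Require Import all_boot all_order all_algebra all_fingroup.
From mathcomp Require Import zify ring.
Set Implicit Arguments. Unset Strict Implicit. Unset Printing Implicit Defensive.

Section Genus.
Local Open Scope group_scope.
Variable T : finType.
Implicit Types s u : {perm T}.

Lemma orb_incl s u : (forall z, s z \in porbit u z) ->
  forall x y, y \in porbit s x -> y \in porbit u x.
Proof.
move=> H x y /porbitP [i ->]; elim: i => [|i IH]; first by rewrite expg0 perm1 porbit_id.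
rewrite expgSr permM; move: IH; rewrite -eq_porbit_mem => /eqP <-; exact: H.
Qed.

Lemma mem_porbit1 s x : s x \in porbit s x.
Proof. by have := mem_porbit s 1 x; rewrite expg1. Qed.

Lemma porbit_trans s x y z : y \in porbit s x -> z \in porbit s y -> z \in porbit s x.
Proof. by rewrite -eq_porbit_mem => /eqP <-. Qed.

Lemma merge_key s a b : a \notin porbit s b -> s a \in porbit (tperm a b * s) a.
Proof.
move=> nab; set u := tperm a b * s; set n := #|porbit s b|.
have ne j : 0 < j < n -> (s ^+ j) b != b.
  case/andP=> j0 jn; have U := uniq_traject_porbit s b.
  have n0 : 0 < n by apply: leq_ltn_trans jn.
  have := nth_uniq b (_ : j < size (traject s b n)) (_ : 0 < size (traject s b n)) U.
  rewrite size_traject => /(_ jn n0).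
  by rewrite !nth_traject // -permX => ->; rewrite -lt0n.
have C i : i < n -> (u ^+ i.+1) a = (s ^+ i.+1) b.
  elim: i => [|i IH] lt; first by rewrite !expg1 permM tpermL.
  have w1 : a != (s ^+ i.+1) b by apply/eqP => E; move: nab; rewrite E mem_porbit.
  have w2 : b != (s ^+ i.+1) b by rewrite eq_sym ne // lt.
  by rewrite expgSr permM IH ?(ltnW lt) // permM tpermD // -permM -expgSr.
have n0 : 0 < n by rewrite lt0n card_porbit_neq0.
have E : (u ^+ n) a = b.
  by rewrite -(prednK n0) C ?prednK // permX iter_porbit.
have bin : b \in porbit u a by rewrite -E mem_porbit.
have <- : u b = s a by rewrite permM tpermR.
exact: porbit_trans bin (mem_porbit1 u b).
Qed.

Lemma merge_mono s a b : a \notin porbit s b ->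
  forall x y, y \in porbit s x -> y \in porbit (tperm a b * s) x.
Proof.
move=> nab; apply: orb_incl => z.
have [->|za] := eqVneq z a; first exact: merge_key.
have [->|zb] := eqVneq z b.
  by rewrite tpermC; apply: merge_key; rewrite porbit_sym.
by rewrite (_ : s z = (tperm a b * s) z) ?mem_porbit1 // permM tpermD // eq_sym.
Qed.

Variable rho : {perm T}.
Definition sig_of (l : seq (T * T)) :=
  foldr (fun p s => tperm p.1 p.2 * s) rho l.
Definition tau_of (l : seq (T * T)) :=
  foldr (fun p s => if p.1 \in porbit s p.2 then s else tperm p.1 p.2 * s) rho l.

Lemma tau_mono l p x y : y \in porbit (tau_of l) x -> y \in porbit (tau_of (p :: l)) x.
Proof. by rewrite /=; case: ifP => // H; apply: merge_mono; rewrite H. Qed.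

Lemma tau_edge l p : p.1 \in porbit (tau_of (p :: l)) p.2.
Proof.
rewrite /=; case: ifP => // H; set t := tperm _ _ * _.
have e1 : t p.1 = tau_of l p.2 by rewrite permM tpermL.
have h : tau_of l p.2 \in porbit t p.2 by apply: merge_mono; rewrite ?H ?mem_porbit1.
rewrite -e1 in h; apply: porbit_trans h _; rewrite porbit_sym; exact: mem_porbit1.
Qed.

Lemma sig_in_tau l x : sig_of l x \in porbit (tau_of l) x.
Proof.
elim: l x => [|p l IH] x; first exact: mem_porbit1.
rewrite [sig_of _]/= permM.
have h1 := tau_mono p (IH (tperm p.1 p.2 x)).
suff h2 : tperm p.1 p.2 x \in porbit (tau_of (p :: l)) x by exact: porbit_trans h2 h1.
case: tpermP => [->|->|_ _]; last exact: porbit_id.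
  by rewrite porbit_sym tau_edge.
exact: tau_edge.
Qed.

Lemma count_step l : #|porbits (sig_of l)| + #|porbits rho| <= size l + 2 * #|porbits (tau_of l)|.
Proof.
elim: l => [|p l IH]; first by rewrite /= add0n addnn -mul2n.
have sS : sig_of (p :: l) = tperm p.1 p.2 * sig_of l by [].
have tS : tau_of (p :: l) = if p.1 \in porbit (tau_of l) p.2 then tau_of l
   else tperm p.1 p.2 * tau_of l by [].
have sz : size (p :: l) = (size l).+1 by [].
rewrite sS tS sz.
have := porbits_mul_tperm (sig_of l) p.1 p.2; rewrite -muln2.
case: ifP => Hin.
  case: (_ \notin _); case: (_ != _) => /= H; move: IH H; set a := #|porbits (tperm _ _ * _)|; set b := #|porbits (sig_of l)|; set c := #|porbits rho|; set d := #|porbits (tau_of l)|; clearbody a b c d; lia.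
have := porbits_mul_tperm (tau_of l) p.1 p.2; rewrite -muln2 Hin /=.
have -> : p.1 != p.2 by apply: contraFneq Hin => ->; rewrite porbit_id.
have -> : p.1 \notin porbit (sig_of l) p.2.
  apply: contraFN Hin => h; apply: orb_incl h; exact: sig_in_tau.
move=> H1 H2; move: IH H1 H2; set a := #|porbits (tperm _ _ * sig_of l)|; set b := #|porbits (sig_of l)|; set c := #|porbits rho|; set d := #|porbits (tau_of l)|; set a2 := #|porbits (tperm _ _ * tau_of l)|; clearbody a b c d a2; lia.
Qed.

Definition Rg (l : seq (T * T)) : rel T :=
  fun x y => (y == rho x) || ((x, y) \in l) || ((y, x) \in l).

Lemma genus l : (forall x y, connect (Rg l) x y) ->
  #|porbits (sig_of l)| + #|porbits rho| <= size l + 2.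
Proof.
move=> Hc; have := count_step l.
have Hr x : rho x \in porbit (tau_of l) x.
  elim: l {Hc} => [|p l IH]; [exact: mem_porbit1 | exact: tau_mono].
have He q : q \in l -> q.1 \in porbit (tau_of l) q.2.
  elim: l {Hc Hr} => [|p l IH] //; rewrite inE => /predU1P [->|/IH]; first exact: tau_edge.
  exact: tau_mono.
have HR x y : Rg l x y -> y \in porbit (tau_of l) x.
  case/orP => [/orP [/eqP ->|/He h]|/He h] /=; [exact: Hr | by rewrite porbit_sym | exact: h].
have Hall : forall a b, b \in porbit (tau_of l) a.
  move=> x y.
  have /connectP [q] := Hc x y.
  elim: q x => [|z q IH] x0 /=; first by move=> _ ->; rewrite porbit_id.
  by case/andP => /HR h1 pth E; apply: porbit_trans h1 (IH z pth E).
suff : #|porbits (tau_of l)| <= 1.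
  set a := #|porbits (sig_of l)|; set c := #|porbits rho|; set d := #|porbits (tau_of l)|.
  clearbody a c d; lia.
case: (pickP (@predT T)) => [x0 _|T0].
  rewrite -(cards1 (porbit (tau_of l) x0)); apply: subset_leq_card.
  apply/subsetP => X /imsetP [y _ ->]; rewrite inE eq_porbit_mem; exact: Hall.
apply: leq_trans (leq_imset_card _ _) _; rewrite eq_card0 //.
Qed.

End Genus.

Section Count.
Local Open Scope group_scope.
Variables (T : finType) (s : {perm T}) (N : nat).

Lemma inv_const (r : {ffun T -> 'I_N}) : (forall z, r (s z) = r z) ->
  forall x y, y \in porbit s x -> r y = r x.
Proof.
move=> H x y /porbitP [i ->]; elim: i => [|i IH]; first by rewrite expg0 perm1.
by rewrite expgSr permM H.
Qed.

Lemma porbit_in z : porbit s z \in porbits s.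
Proof. by apply: imset_f. Qed.

Definition PT := {X : {set T} | X \in porbits s}.
Definition toR (g : {ffun PT -> 'I_N}) : {ffun T -> 'I_N} :=
  [ffun z => g (exist _ (porbit s z) (porbit_in z))].

Lemma toR_inj : injective toR.
Proof.
move=> g1 g2 E; apply/ffunP => -[X HX].
have /imsetP [z _ EX] := HX.
have -> : exist _ X HX = exist _ (porbit s z) (porbit_in z) :> PT by apply: val_inj.
by have := congr1 (fun r : {ffun T -> 'I_N} => r z) E; rewrite !ffunE.
Qed.

Lemma ex_orb (X : PT) : exists z, val X == porbit s z.
Proof. by case: X => X /= /imsetP [z _ ->]; exists z. Qed.

Lemma card_inv :
  #|[set r : {ffun T -> 'I_N} | [forall z, r (s z) == r z]]| = (N ^ #|porbits s|)%N.
Proof.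
have -> : [set r : {ffun T -> 'I_N} | [forall z, r (s z) == r z]] = toR @: setT.
  apply/setP => r; rewrite inE; apply/idP/imsetP.
    move/forallP => H; exists [ffun X : PT => r (xchoose (ex_orb X))] => //.
    apply/ffunP => z; rewrite !ffunE /=.
    have := xchooseP (ex_orb (exist _ (porbit s z) (porbit_in z))).
    rewrite /= eq_porbit_mem => Hz.
    exact: (inv_const (fun z => eqP (H z)) Hz).
  move=> [g _ ->]; apply/forallP => z; rewrite !ffunE; apply/eqP; congr (g _).
  apply: val_inj; rewrite /=; have := porbit_perm s 1 z; by rewrite expg1.
rewrite card_imset; last exact: toR_inj.
by rewrite cardsT card_ffun card_ord card_sig.
Qed.
End Count.

Section HE.
Local Open Scope group_scope.
Variables (v : nat) (e : halfedge v -> halfedge v).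
Hypothesis einv : involutive e.
Hypothesis efix : forall h, e h != h.

Definition rot (b : bool) (i : 'I_3) : 'I_3 := if b then ordS i else ord_pred i.
Definition rho (S : {ffun 'I_v -> bool}) (h : halfedge v) : halfedge v :=
  (h.1, rot (S h.1) h.2).
Lemma rot_inj b : injective (rot b).
Proof. by case: b; [exact: ordS_inj | exact: ord_pred_inj]. Qed.
Lemma rho_inj S : injective (rho S).
Proof. by move=> [x i] [y j] [<-] /rot_inj ->. Qed.
Definition rhoP S := perm (@rho_inj S).
Definition sigF S h := rho S (e h).
Lemma sigF_inj S : injective (sigF S).
Proof. by move=> x y /rho_inj /(inv_inj einv). Qed.
Definition sigP S := perm (@sigF_inj S).

Definition ep (h : halfedge v) := (enum_rank h < enum_rank (e h))%N.
Lemma ep_or h : ep h || ep (e h).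
Proof.
rewrite /ep einv; case: ltngtP => // /val_inj /enum_rank_inj E.
by move: (efix h); rewrite -E eqxx.
Qed.
Lemma ep_nand h : ep h -> ~~ ep (e h).
Proof. by rewrite /ep einv => /ltnW; rewrite leqNgt. Qed.
Lemma epC h : ~~ ep h = ep (e h).
Proof. by have := ep_or h; have := @ep_nand h; case: (ep h) => //= /(_ isT) /negbTE ->. Qed.

Definition elist := [seq (h, e h) | h <- enum ep].

Lemma sig_of_gen S (s : seq (halfedge v)) : uniq s -> all ep s -> forall x,
  sig_of (rhoP S) [seq (h, e h) | h <- s] x =
  rho S (if (x \in s) || (e x \in s) then e x else x).
Proof.
elim: s => [|h s IH] /=; first by move=> _ _ x; rewrite permE.
case/andP => hs us /andP [eh es] x.
rewrite permM IH //.
have ehs : e h \notin s by apply: contra (ep_nand eh) => /(allP es).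
case: tpermP => [->|->|nh neh].
- by rewrite (negbTE ehs) einv (negbTE hs) mem_head.
- by rewrite einv (negbTE hs) (negbTE ehs) mem_head orbT.
- rewrite !inE (_ : (x == h) = false) 1?(_ : (e x == h) = false) //.
    by apply/eqP => E; apply: neh; rewrite -E einv.
  exact/eqP.
Qed.

Lemma sig_of_l S : sig_of (rhoP S) elist = sigP S.
Proof.
apply/permP => x; rewrite sig_of_gen ?enum_uniq //; last by apply/allP => h; rewrite mem_enum.
by rewrite !mem_enum ep_or permE.
Qed.

Lemma rot3 b (i k : 'I_3) : [|| k == i, k == rot b i | k == rot b (rot b i)].
Proof.
by case: b; case: i => [[|[|[|i]]] Hi] //; case: k => [[|[|[|k]]] Hk].
Qed.

Lemma conn S : tg_connected e -> forall x y, connect (Rg (rhoP S) elist) x y.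
Proof.
move=> Hc.
have step_rho h : connect (Rg (rhoP S) elist) h (rhoP S h).
  by apply: connect1; rewrite /Rg eqxx.
have step_e h : connect (Rg (rhoP S) elist) h (e h).
  apply: connect1; rewrite /Rg; case Eh: (ep h).
    by rewrite (map_f (fun h => (h, e h))) ?mem_enum ?orbT.
  have E : ep (e h) by move: (ep_or h); rewrite Eh.
  have := map_f (fun h => (h, e h)) (_ : e h \in enum ep); rewrite einv mem_enum => /(_ E) M.
  by rewrite /elist M !orbT.
have vert x i k : connect (Rg (rhoP S) elist) (x, i) (x, k).
  have rE j : rhoP S (x, j) = (x, rot (S x) j) by rewrite permE.
  case/or3P: (rot3 (S x) i k) => /eqP ->; first exact: connect0.
    by rewrite -rE; exact: step_rho.
  apply: connect_trans (step_rho _) _; rewrite rE.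
  by rewrite -[(x, rot _ (rot _ i))]rE; exact: step_rho.
have adj x y i k : tg_adj e x y -> connect (Rg (rhoP S) elist) (x, i) (y, k).
  case/existsP => i' /existsP [j' /eqP E].
  apply: connect_trans (vert x i i') _; apply: connect_trans (step_e _) _.
  by rewrite E; exact: vert.
move=> [x i] [y k]; have /connectP [p] := Hc x y.
elim: p x i => [|z p IH] x i /=; first by move=> _ ->; exact: vert.
by case/andP => a pth E; apply: connect_trans (adj _ _ i i a) (IH _ _ pth E).
Qed.

Lemma card_rho S : v <= #|porbits (rhoP S)|.
Proof.
pose f x := porbit (rhoP S) (x, he0).
have fstE x i j : (((rhoP S) ^+ j) (x, i)).1 = x.
  by elim: j => [|j IH]; rewrite ?expg0 ?perm1 // expgSr permM permE.
have finj : injective f.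
  move=> x y E; have : (y, he0) \in f x by rewrite E porbit_id.
  by case/porbitP => j /(congr1 fst) /=; rewrite fstE.
rewrite -{1}(card_ord v) -(card_imset _ finj); apply: subset_leq_card.
apply/subsetP => X /imsetP [x _ ->]; exact: porbit_in.
Qed.

Lemma card_ep : (#|ep| * 2 = 3 * v)%N.
Proof.
have E := cardC ep; rewrite card_prod !card_ord in E.
suff C : #|[predC ep]| = #|ep|.
  by move: E; rewrite C; set a := #|ep|; clearbody a; lia.
have -> : #|[predC ep]| = #|e @: [set h | ep h]|.
  apply: eq_card => h; rewrite !inE epC; apply/idP/imsetP.
    by move=> E2; exists (e h); rewrite ?inE // einv.
  by case=> h'; rewrite inE => Hh ->; rewrite einv.
rewrite card_imset; last exact: inv_inj einv.
by apply: eq_card => h; rewrite inE.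
Qed.

Lemma cycles_bound S : tg_connected e -> #|porbits (sigP S)| <= v./2 + 2.
Proof.
move=> Hc; have := genus (conn S Hc); rewrite sig_of_l size_map -cardE.
have := card_rho S; have := card_ep; have := odd_double_half v; rewrite -addnn.
have := leq_b1 (odd v).
set a := #|porbits (sigP S)|; set b := #|porbits (rhoP S)|; set c := #|ep|.
set o := nat_of_bool (odd v); clearbody a b c o; lia.
Qed.
End HE.

Import GRing.Theory Num.Theory.
Local Open Scope ring_scope.

Section SL.
Variable n : nat.
Local Notation N := n.+2.
Local Notation nn := (@ord_max n.+1).

Definition Bp (p : 'I_N * 'I_N) : 'M[rat]_N :=
  if p.1 != p.2 then delta_mx p.1 p.2 else delta_mx p.1 p.1 - delta_mx nn nn.
Definition Dp (p : 'I_N * 'I_N) : 'M[rat]_N :=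
  if p.1 != p.2 then delta_mx p.2 p.1 else delta_mx p.1 p.1 - (N%:R^-1) *: 1%:M.

Lemma slbasisE (x : slidx N) : slbasis x = Bp (val x).
Proof.
case: x => [[i j] Hij]; rewrite /slbasis /Bp /=.
case: ifP => _; apply/matrixP => k l; rewrite !mxE //.
have [->|kl] := eqVneq k l; first by rewrite /= !andbb.
rewrite /= (_ : (k == i) && (l == i) = false) 1?(_ : (k == nn) && (l == nn) = false) //.
  by apply/negbTE; apply: contra kl => /andP [/eqP -> /eqP ->].
by apply/negbTE; apply: contra kl => /andP [/eqP -> /eqP ->].
Qed.

Lemma sum_eq_l (F : 'I_N -> rat) i : \sum_k (k == i)%:R * F k = F i.
Proof.
rewrite (bigD1 i) //= eqxx mul1r big1 ?addr0 // => k /negbTE ->; by rewrite mul0r.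
Qed.

Lemma tr_delta_mul i j (A : 'M[rat]_N) : \tr (delta_mx i j *m A) = A j i.
Proof.
rewrite /mxtrace (bigD1 i) //= big1 ?addr0 => [|k ki]; rewrite mxE.
  rewrite (bigD1 j) //= big1 ?addr0 => [|m mj]; first by rewrite mxE !eqxx mul1r.
  by rewrite mxE (negbTE mj) andbF mul0r.
by rewrite big1 // => m _; rewrite mxE (negbTE ki) mul0r.
Qed.

Lemma tr_delta i j : \tr (delta_mx i j : 'M[rat]_N) = (i == j)%:R.
Proof. by rewrite -[delta_mx i j]mulmx1 tr_delta_mul mxE eq_sym. Qed.

Lemma Nneq0 : (N%:R : rat) != 0.
Proof. by rewrite pnatr_eq0. Qed.

Lemma trD p : p != (nn, nn) -> \tr (Dp p) = 0.
Proof.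
case: p => i j /= H; rewrite /Dp /=; case: ifP => [ij|/negbFE/eqP ij].
  by rewrite tr_delta eq_sym (negbTE ij).
by rewrite raddfB /= mxtraceZ mxtrace1 tr_delta eqxx mulVf ?Nneq0 // subrr.
Qed.

Lemma trBD p q : p != (nn, nn) -> q != (nn, nn) -> \tr (Bp p *m Dp q) = (p == q)%:R.
Proof.
case: p q => i j [k l] Hp Hq; rewrite /Bp /Dp /= xpair_eqE.
move: Hp Hq; have [<-|ij] := eqVneq i j; have [<-|kl] := eqVneq k l; move=> Hp Hq;
  rewrite ?eqxx ?ij ?kl /=.
- rewrite mulmxBl mulmxBr mulmxBr !raddfB /= -!scalemxAr !mxtraceZ !mulmx1 !tr_delta_mul !mxE.
  rewrite !tr_delta !eqxx andbb.
  have nk : (nn == k) = false.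
    by apply/negbTE; apply: contra Hq; move/eqP => <-.
  rewrite nk /= mulr1 oppr0 sub0r opprK; ring.
- rewrite mulmxBl raddfB /= !tr_delta_mul !mxE.
  rewrite (_ : (i == l) && (i == k) = false) 1?(_ : (nn == l) && (nn == k) = false) ?subrr.
  + by case: (i =P k) => [E|] //=; case: (i =P l) => // E2; move: kl; rewrite -E -E2 eqxx.
  + by apply/negbTE; apply: contra kl => /andP [/eqP <- /eqP <-].
  + by apply/negbTE; apply: contra kl => /andP [/eqP <- /eqP <-].
- by rewrite tr_delta_mul !mxE /= (eq_sym j i) (negbTE ij) mulr0 subr0 andbC.
- by rewrite tr_delta_mul mxE andbC.
Qed.

Lemma sumBD (Y : 'M[rat]_N) :
  \sum_(p : 'I_N * 'I_N) \tr (Dp p *m Y) *: Bp p = Y - (\tr Y / N%:R) *: 1%:M.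
Proof.
set t := \tr Y / N%:R.
have -> : \sum_(p : 'I_N * 'I_N) \tr (Dp p *m Y) *: Bp p =
    \sum_i \sum_j \tr (Dp (i, j) *m Y) *: Bp (i, j).
  by rewrite pair_bigA; apply: eq_bigr => -[i j].
rewrite [in RHS](matrix_sum_delta Y).
have Hrow i : \sum_j \tr (Dp (i, j) *m Y) *: Bp (i, j) =
   (Y i i - t) *: (delta_mx i i - delta_mx nn nn) + \sum_(j | j != i) Y i j *: delta_mx i j.
  rewrite (bigD1 i) //=; congr (_ + _).
    rewrite /Dp /Bp /= eqxx /=; congr (_ *: _).
    rewrite mulmxBl raddfB /= tr_delta_mul -scalemxAl mul1mx mxtraceZ.
    by rewrite /t mulrC.
  by apply: eq_bigr => j ji; rewrite /Dp /Bp /= eq_sym ji tr_delta_mul.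
have Hrow2 i : \sum_j Y i j *: delta_mx i j =
   Y i i *: delta_mx i i + \sum_(j | j != i) Y i j *: delta_mx i j by rewrite (bigD1 i).
rewrite (eq_bigr _ (fun i _ => Hrow i)) (eq_bigr _ (fun i _ => Hrow2 i)) !big_split /=.
suff -> : \sum_i (Y i i - t) *: (delta_mx i i - delta_mx nn nn) =
   \sum_i Y i i *: delta_mx i i - t *: 1%:M by rewrite addrAC.
rewrite (eq_bigr (fun i => Y i i *: delta_mx i i - t *: delta_mx i i - (Y i i - t) *: delta_mx nn nn));
  last by move=> i _; rewrite scalerBr scalerBl.
rewrite !sumrB -scaler_sumr -mx1_sum_delta -scaler_suml sumrB sumr_const card_ord.
have -> : \sum_i Y i i = \tr Y by [].
have -> : t *+ N = \tr Y by rewrite /t -mulr_natr divfK ?Nneq0.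
by rewrite subrr scale0r subr0.
Qed.

Definition condp (p : 'I_N * 'I_N) := (val p.1 != N.-1) || (val p.2 != N.-1).
Lemma condpE p : condp p = (p != (nn, nn)).
Proof. by case: p => i j; rewrite /condp xpair_eqE negb_and. Qed.

Lemma sum_sl (V : zmodType) (F : 'I_N * 'I_N -> V) : F (nn, nn) = 0 ->
  \sum_(x : slidx N) F (val x) = \sum_p F p.
Proof.
move=> F0; rewrite [RHS](bigD1 (nn, nn)) //= F0 add0r.
have -> : \sum_(p | p != (nn, nn)) F p = \sum_(p | condp p) F p.
  by apply: eq_bigl => p; rewrite condpE.
rewrite (reindex_omap (val : slidx N -> 'I_N * 'I_N) insub); last first.
  by move=> i Pi; rewrite insubT.
symmetry; apply: eq_bigl => -[i iA] /=; have iA2 : condp i := iA; rewrite iA2 /=.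
case: insubP => [u _ E|]; last by move/negP => H; case: (H iA).
by apply/eqP; congr Some; apply: val_inj.
Qed.

Lemma Bnn : Bp (nn, nn) = 0.
Proof. by rewrite /Bp /= eqxx /= subrr. Qed.

Lemma sumBD_sl (Y : 'M[rat]_N) :
  \sum_(x : slidx N) \tr (Dp (val x) *m Y) *: slbasis x = Y - (\tr Y / N%:R) *: 1%:M.
Proof.
rewrite -sumBD -(@sum_sl _ (fun p => \tr (Dp p *m Y) *: Bp p)); last by rewrite Bnn scaler0.
by apply: eq_bigr => x _; rewrite slbasisE.
Qed.

Lemma valcond (x : slidx N) : val x != (nn, nn).
Proof. by rewrite -condpE; case: x. Qed.

Lemma tinvE (a b : slidx N) :
  tinv (@slbasis N) a b = \tr (Dp (val a) *m Dp (val b)).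
Proof.
pose M : 'M[rat]_#|{: slidx N}| :=
  \matrix_(i, j) \tr (Dp (val (enum_val i)) *m Dp (val (enum_val j))).
have GM : gram (@slbasis N) *m M = 1%:M.
  apply/matrixP => i k; rewrite !mxE.
  under eq_bigr do rewrite !mxE.
  rewrite -(big_enum_val (fun x => metric (@slbasis N) (enum_val i) x *
      \tr (Dp (val x) *m Dp (val (enum_val k))))) /=.
  have -> : \sum_(x in {: slidx N}) metric (@slbasis N) (enum_val i) x *
      \tr (Dp (val x) *m Dp (val (enum_val k))) =
     \tr (slbasis (enum_val i) *m \sum_(x : slidx N) \tr (Dp (val x) *m Dp (val (enum_val k))) *: slbasis x).
    rewrite mulmx_sumr raddf_sum; apply: eq_bigr => x _.
    by rewrite /= -scalemxAr mxtraceZ mulrC.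
  rewrite sumBD_sl trD ?valcond // mul0r scale0r subr0 slbasisE trBD ?valcond //.
  by rewrite (inj_eq val_inj) (inj_eq enum_val_inj).
have [Gu _] := mulmx1_unit GM.
have IM : invmx (gram (@slbasis N)) = M.
  by rewrite -[M]mul1mx -(mulVmx Gu) -mulmxA GM mulmx1.
by rewrite /tinv IM mxE !enum_rankK.
Qed.

Definition Kc (al be : 'I_N * 'I_N) : rat :=
  \sum_(a : slidx N) \sum_(b : slidx N)
     slbasis a al.1 al.2 * slbasis b be.1 be.2 * tinv (@slbasis N) a b.

Lemma scaleE c (A : 'M[rat]_N) i j : (c *: A) i j = c * A i j.
Proof. by rewrite mxE. Qed.

Lemma KcE al be : Kc al be =
  ((al.1 == be.2) && (al.2 == be.1))%:R - N%:R^-1 * ((al.1 == al.2) && (be.1 == be.2))%:R.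
Proof.
have H1 a : \sum_(b : slidx N) slbasis a al.1 al.2 * slbasis b be.1 be.2 * tinv (@slbasis N) a b
   = slbasis a al.1 al.2 * Dp (val a) be.1 be.2.
  have := congr1 (fun A : 'M[rat]_N => A be.1 be.2) (sumBD_sl (Dp (val a))).
  rewrite trD ?valcond // mul0r scale0r subr0 /= summxE => <-.
  rewrite mulr_sumr; apply: eq_bigr => b _; rewrite scaleE tinvE mxtrace_mulC.
  by rewrite -mulrA [X in _ * X]mulrC.
rewrite /Kc (eq_bigr _ (fun a _ => H1 a)).
have := congr1 (fun A : 'M[rat]_N => A al.1 al.2) (sumBD_sl (delta_mx be.2 be.1)).
rewrite /= summxE tr_delta => E.
rewrite (eq_bigr (fun a => \tr (Dp (val a) *m delta_mx be.2 be.1) * slbasis a al.1 al.2)).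
  under eq_bigr do rewrite -scaleE.
  rewrite E !mxE eq_sym (eq_sym be.2 be.1).
  by case: (be.1 == be.2); case: (al.1 == al.2); rewrite /= ?mulr0 ?mul0r ?mulr1n ?mulr1 ?mul1r.
by move=> a _; rewrite mxtrace_mulC tr_delta_mul mulrC.
Qed.

End SL.

Lemma I3_cases (i : 'I_3) : [\/ i = he0, i = he1 | i = he2].
Proof.
by case: i => [[|[|[|m]]] Hm] //; [apply: Or31 | apply: Or32 | apply: Or33];
  apply/val_inj; rewrite /= inordK.
Qed.

Lemma he_neq : [/\ he0 != he1, he0 != he2 & he1 != he2].
Proof. by rewrite /he0 /he1 /he2 -!(inj_eq val_inj) /= !inordK. Qed.

Lemma rotT0 : rot true he0 = he1. Proof. by apply/val_inj; rewrite /= /he0 /he1 !inordK. Qed.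
Lemma rotT1 : rot true he1 = he2. Proof. by apply/val_inj; rewrite /= /he1 /he2 !inordK. Qed.
Lemma rotT2 : rot true he2 = he0. Proof. by apply/val_inj; rewrite /= /he0 /he2 !inordK. Qed.
Lemma rotF0 : rot false he0 = he2. Proof. by apply/val_inj; rewrite /= /he0 /he2 !inordK. Qed.
Lemma rotF1 : rot false he1 = he0. Proof. by apply/val_inj; rewrite /= /he0 /he1 !inordK. Qed.
Lemma rotF2 : rot false he2 = he1. Proof. by apply/val_inj; rewrite /= /he1 /he2 !inordK. Qed.

Section Gen.
Variable (R : comRingType).

Lemma prod3 (F : 'I_3 -> R) : \prod_i F i = F he0 * F he1 * F he2.
Proof.
rewrite !big_ord_recl big_ord0 mulr1 mulrA; congr (F _ * F _ * F _);
  by apply/val_inj; rewrite /= ?inordK.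
Qed.

Lemma sum3 (A : finType) (F : A -> A -> A -> R) :
  \sum_(t : {ffun 'I_3 -> A}) F (t he0) (t he1) (t he2) = \sum_a \sum_b \sum_c F a b c.
Proof.
have -> : \sum_a \sum_b \sum_c F a b c = \sum_(p : A * (A * A)) F p.1 p.2.1 p.2.2.
  under eq_bigr => a _ do rewrite pair_bigA.
  by rewrite pair_bigA.
pose f (t : {ffun 'I_3 -> A}) := (t he0, (t he1, t he2)).
pose g (p : A * (A * A)) := [ffun i => if i == he0 then p.1 else if i == he1 then p.2.1 else p.2.2].
have fK : cancel f g.
  move=> t; apply/ffunP => i; rewrite ffunE.
  case: (I3_cases i) => ->; case: he_neq => h01 h02 h12.
  - by rewrite eqxx.
  - by rewrite eq_sym (negbTE h01) eqxx.
  - by rewrite eq_sym (negbTE h02) eq_sym (negbTE h12).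
have gK : cancel g f.
  move=> [a [b c]]; rewrite /f !ffunE; case: he_neq => h01 h02 h12.
  by rewrite eqxx eq_sym (negbTE h01) eqxx eq_sym (negbTE h02) eq_sym (negbTE h12).
rewrite (reindex f) //; exists g => x _; [exact: fK | exact: gK].
Qed.

Lemma curry_sum (v : nat) (A : finType) (G : {ffun 'I_v * 'I_3 -> A} -> R) :
  \sum_(T : {ffun 'I_v -> {ffun 'I_3 -> A}}) G [ffun h => T h.1 h.2] = \sum_Rf G Rf.
Proof.
pose f (T : {ffun 'I_v -> {ffun 'I_3 -> A}}) : {ffun 'I_v * 'I_3 -> A} := [ffun h => T h.1 h.2].
pose g (Rf : {ffun 'I_v * 'I_3 -> A}) : {ffun 'I_v -> {ffun 'I_3 -> A}} :=
  [ffun x => [ffun i => Rf (x, i)]].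
rewrite (reindex f) //; exists g => x _.
  by apply/ffunP => y; apply/ffunP => i; rewrite !ffunE.
by apply/ffunP => -[y i]; rewrite !ffunE.
Qed.

Lemma sum_pick (A : finType) (F : A -> R) a : \sum_j (j == a)%:R * F j = F a.
Proof.
rewrite (bigD1 a) //= eqxx mul1r big1 ?addr0 // => k /negbTE ->; by rewrite mul0r.
Qed.

Lemma prod_bool (A : finType) (P : pred A) : \prod_h (P h)%:R = ([forall h, P h])%:R :> R.
Proof.
case: (boolP [forall h, P h]) => [/forallP H|/forallPn [h /negbTE Ph]].
  by rewrite big1 // => h _; rewrite H.
by rewrite (bigD1 h) //= Ph mul0r.
Qed.
End Gen.

Lemma big_sig_cond (R : Type) (idx : R) (op : Monoid.com_law idx) (T : finType)
    (P : pred T) (F : T -> R) :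
  \big[op/idx]_(h | P h) F h = \big[op/idx]_(u : {h | P h}) F (val u).
Proof.
rewrite (reindex_omap (val : {h | P h} -> T) insub); last first.
  by move=> i Pi; rewrite insubT.
apply: eq_bigl => -[i Pi] /=; have Pi2 : P i := Pi; rewrite Pi2 /=.
case: insubP => [u _ E|]; last by move/negP => H; case: (H Pi).
by apply/eqP; congr Some; apply: val_inj.
Qed.

Section Main.
Variable n : nat.
Local Notation N := n.+2.
Variables (v : nat) (e : halfedge v -> halfedge v).
Hypothesis einv : involutive e.
Hypothesis efix : forall h, e h != h.

Definition fT (X Y Z : 'M[rat]_N) := \tr (X *m (Y *m Z - Z *m Y)).
Definition Vf (g : halfedge v -> 'M[rat]_N) :=
  \prod_(x : 'I_v) fT (g (x, he0)) (g (x, he1)) (g (x, he2)).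
Definition sgn (b : bool) : rat := if b then 1 else -1.
Definition sgnS (S : {ffun 'I_v -> bool}) := \prod_x sgn (S x).

Lemma trXYZ (X Y Z : 'M[rat]_N) :
  \tr (X *m (Y *m Z)) = \sum_a \sum_b \sum_c X a b * Y b c * Z c a.
Proof.
rewrite /mxtrace; apply: eq_bigr => a _; rewrite !mxE; apply: eq_bigr => b _.
by rewrite ?mxE mulr_sumr; apply: eq_bigr => c _; rewrite ?mxE mulrA.
Qed.

Lemma fT_exp (G : 'I_3 -> 'M[rat]_N) : fT (G he0) (G he1) (G he2) =
  \sum_(s : bool) sgn s * \sum_(t : {ffun 'I_3 -> 'I_N}) \prod_i G i (t i) (t (rot s i)).
Proof.
rewrite big_bool (_ : sgn true = 1) // (_ : sgn false = -1) // mul1r mulN1r.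
under eq_bigr do rewrite prod3 rotT0 rotT1 rotT2.
under [X in _ = _ - X]eq_bigr do rewrite prod3 rotF0 rotF1 rotF2.
rewrite (sum3 (fun a b c => G he0 a b * G he1 b c * G he2 c a)).
rewrite (sum3 (fun a b c => G he0 a c * G he1 b a * G he2 c b)).
rewrite /fT mulmxBr raddfB /= !trXYZ; congr (_ - _).
apply: eq_bigr => a _; rewrite [RHS]exchange_big; apply: eq_bigr => b _.
by apply: eq_bigr => c _; ring.
Qed.

Lemma VE g : Vf g = \sum_(S : {ffun 'I_v -> bool}) sgnS S *
  \sum_(Rf : {ffun halfedge v -> 'I_N}) \prod_h g h (Rf h) (Rf (rho S h)).
Proof.
rewrite /Vf.
under eq_bigr => x _ do rewrite (fT_exp (fun i => g (x, i))).
rewrite bigA_distr_bigA; apply: eq_bigr => S _.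
rewrite big_split /=; congr (_ * _).
rewrite bigA_distr_bigA /=.
rewrite -(curry_sum (fun Rf : {ffun halfedge v -> 'I_N} => \prod_h g h (Rf h) (Rf (rho S h)))).
apply: eq_bigr => T _; rewrite pair_bigA /=; apply: eq_bigr => -[x i] _.
by rewrite !ffunE.
Qed.

Definition Eps (psi : {ffun halfedge v -> 'I_N * 'I_N}) (h : halfedge v) : 'M[rat]_N :=
  delta_mx (psi h).1 (psi h).2.

Lemma ML g : Vf g = \sum_(psi : {ffun halfedge v -> 'I_N * 'I_N})
  (\prod_h g h (psi h).1 (psi h).2) * Vf (Eps psi).
Proof.
under [RHS]eq_bigr do rewrite VE mulr_sumr.
rewrite exchange_big [LHS]VE; apply: eq_bigr => S _.
under [RHS]eq_bigr do rewrite mulrCA.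
rewrite -mulr_sumr; congr (_ * _).
under [RHS]eq_bigr do rewrite mulr_sumr.
rewrite exchange_big; apply: eq_bigr => Rf _.
rewrite (eq_bigr (fun psi : {ffun halfedge v -> 'I_N * 'I_N} =>
   \prod_h (g h (psi h).1 (psi h).2 * (psi h == (Rf h, Rf (rho S h)))%:R))); last first.
  move=> psi _; rewrite -big_split /=; apply: eq_bigr => h _; rewrite mxE.
  case: (psi h) => a b /=; rewrite xpair_eqE; congr (_ * (_)%:R).
  by rewrite (eq_sym a) (eq_sym b).
rewrite -(bigA_distr_bigA (fun h j => g h j.1 j.2 * (j == (Rf h, Rf (rho S h)))%:R)).
apply: eq_bigr => h _.
rewrite (eq_bigr (fun j => (j == (Rf h, Rf (rho S h)))%:R * g h j.1 j.2)) ?sum_pick //.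
by move=> j _; exact: mulrC.
Qed.

Lemma RG (F : halfedge v -> rat) : \prod_h F h = \prod_(h | ep e h) (F h * F (e h)).
Proof.
rewrite (bigID (ep e)) /= big_split /=; congr (_ * _).
rewrite (reindex e) /=; last by apply: onW_bij; exact: (inv_bij einv).
by apply: eq_bigl => h; rewrite (epC einv efix) einv.
Qed.

Lemma FL (I : finType) (G : halfedge v -> I -> I -> rat) :
  \sum_(phi : {ffun halfedge v -> I}) \prod_(h | ep e h) G h (phi h) (phi (e h)) =
  \prod_(h | ep e h) \sum_a \sum_b G h a b.
Proof.
rewrite [RHS]big_sig_cond.
under [RHS]eq_bigr do rewrite pair_bigA.
rewrite bigA_distr_bigA.
pose toP (phi : {ffun halfedge v -> I}) : {ffun {h | ep e h} -> I * I} :=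
  [ffun u => (phi (val u), phi (e (val u)))].
have inj : injective toP.
  move=> p1 p2 E; apply/ffunP => h.
  case Eh: (ep e h).
    have := congr1 (fun P : {ffun {h | ep e h} -> I * I} => (P (exist _ h Eh)).1) E.
    by rewrite /= !ffunE.
  have Eh2 : ep e (e h) by move: (epC einv efix h); rewrite Eh.
  have := congr1 (fun P : {ffun {h | ep e h} -> I * I} => (P (exist _ (e h) Eh2)).2) E.
  by rewrite /= !ffunE /= einv.
have bij : bijective toP.
  apply: inj_card_bij inj _.
  rewrite !card_ffun card_prod card_sig card_prod !card_ord.
  have := card_ep einv efix; set k := #|ep e| => hk.
  by rewrite expnMn -expnD (_ : (k + k = v * 3)%N) //; lia.
rewrite (reindex toP) /=; last exact: onW_bij.
apply: eq_bigr => phi _; rewrite [LHS]big_sig_cond; apply: eq_bigr => u _.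
by rewrite ffunE.
Qed.

Lemma Wexp : W_sl N e = \sum_(psi : {ffun halfedge v -> 'I_N * 'I_N})
   Vf (Eps psi) * \prod_(h | ep e h) Kc (psi h) (psi (e h)).
Proof.
rewrite /W_sl /Wweight.
rewrite (eq_bigr (fun phi : {ffun halfedge v -> slidx N} => Vf (fun h => slbasis (phi h)) *
   \prod_(h | ep e h) tinv (@slbasis N) (phi h) (phi (e h)))) //.
under eq_bigr do rewrite ML mulr_suml.
rewrite exchange_big; apply: eq_bigr => psi _.
under eq_bigr do rewrite mulrAC.
rewrite -mulr_suml mulrC; congr (_ * _).
rewrite (eq_bigr (fun phi : {ffun halfedge v -> slidx N} => \prod_(h | ep e h)
   (slbasis (phi h) (psi h).1 (psi h).2 * slbasis (phi (e h)) (psi (e h)).1 (psi (e h)).2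
     * tinv (@slbasis N) (phi h) (phi (e h))))); last first.
  move=> phi _; rewrite (RG (fun h => slbasis (phi h) (psi h).1 (psi h).2)).
  by rewrite -big_split.
rewrite (FL (fun h a b => slbasis a (psi h).1 (psi h).2 *
   slbasis b (psi (e h)).1 (psi (e h)).2 * tinv (@slbasis N) a b)).
by [].
Qed.

End Main.

Section Kill.
Variable n : nat.
Local Notation N := n.+2.
Local Notation J := ('I_N * 'I_N)%type.
Variables (v : nat) (e : halfedge v -> halfedge v).
Hypothesis einv : involutive e.
Hypothesis efix : forall h, e h != h.

Definition upd (psi : {ffun halfedge v -> J}) h0 j : {ffun halfedge v -> J} :=
  [ffun h => if h == h0 then j else psi h].

Lemma Vf_ext (g1 g2 : halfedge v -> 'M[rat]_N) : g1 =1 g2 -> Vf g1 = Vf g2.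
Proof. by move=> E; apply: eq_bigr => x _; rewrite !E. Qed.

Lemma Vf_lin (g : halfedge v -> 'M[rat]_N) h0 (M : 'I_N -> 'M[rat]_N) :
  \sum_k Vf (fun h => if h == h0 then M k else g h) =
  Vf (fun h => if h == h0 then \sum_k M k else g h).
Proof.
under eq_bigr do rewrite VE.
rewrite [RHS]VE exchange_big; apply: eq_bigr => S _; rewrite -mulr_sumr; congr (_ * _).
rewrite exchange_big; apply: eq_bigr => Rf _.
rewrite [RHS](bigD1 h0) //= eqxx summxE mulr_suml; apply: eq_bigr => k _.
rewrite (bigD1 h0) //= eqxx; congr (_ * _); apply: eq_bigr => h /negbTE ->; by [].
Qed.

Lemma fT1l (Y Z : 'M[rat]_N) : fT 1%:M Y Z = 0.
Proof. by rewrite /fT mul1mx raddfB /= mxtrace_mulC subrr. Qed.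
Lemma fT1m (X Z : 'M[rat]_N) : fT X 1%:M Z = 0.
Proof. by rewrite /fT mul1mx mulmx1 subrr mulmx0 mxtrace0. Qed.
Lemma fT1r (X Y : 'M[rat]_N) : fT X Y 1%:M = 0.
Proof. by rewrite /fT mul1mx mulmx1 subrr mulmx0 mxtrace0. Qed.

Lemma Vf_one (g : halfedge v -> 'M[rat]_N) h0 :
  Vf (fun h => if h == h0 then 1%:M else g h) = 0.
Proof.
rewrite /Vf (bigD1 h0.1) //=; case: h0 => x0 i0 /=.
rewrite !xpair_eqE eqxx /=; case: he_neq => h01 h02 h12.
case: (I3_cases i0) => ->.
- by rewrite eqxx eq_sym (negbTE h01) eq_sym (negbTE h02) fT1l mul0r.
- by rewrite eqxx (negbTE h01) eq_sym (negbTE h12) fT1m mul0r.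
- by rewrite eqxx (negbTE h02) (negbTE h12) fT1r mul0r.
Qed.

Lemma sum_split (F : {ffun halfedge v -> J} -> rat) h0 j0 :
  \sum_psi F psi = \sum_(psi : {ffun halfedge v -> J} | psi h0 == j0) \sum_(j : J) F (upd psi h0 j).
Proof.
rewrite exchange_big /= (partition_big (fun psi : {ffun halfedge v -> J} => psi h0) predT) //=.
apply: eq_bigr => j _.
rewrite (reindex_onto (fun psi : {ffun halfedge v -> J} => upd psi h0 j) (fun psi : {ffun halfedge v -> J} => upd psi h0 j0)) /=.
  apply: eq_bigl => psi; rewrite ffunE eqxx eqxx /=.
  apply/eqP/eqP => [E|E].
    by have := congr1 (fun p : {ffun halfedge v -> J} => p h0) E; rewrite !ffunE eqxx.
  apply/ffunP => h; rewrite !ffunE; case: eqP => // ->; by rewrite E.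
move=> psi /eqP E; apply/ffunP => h; rewrite !ffunE; case: eqP => // ->; by rewrite E.
Qed.

Lemma Kill h0 (c : {ffun halfedge v -> J} -> rat) :
  (forall psi j, c (upd psi h0 j) = c psi) ->
  \sum_psi Vf (Eps psi) * (c psi * ((psi h0).1 == (psi h0).2)%:R) = 0.
Proof.
move=> Hc; rewrite (sum_split _ h0 (ord0, ord0)); apply: big1 => psi _.
have E j : Vf (Eps (upd psi h0 j)) =
    Vf (fun h => if h == h0 then delta_mx j.1 j.2 else Eps psi h).
  by apply: Vf_ext => h; rewrite /Eps ffunE; case: (h == h0).
rewrite (eq_bigr (fun j : J => c psi * ((j.1 == j.2)%:R *
   Vf (fun h => if h == h0 then delta_mx j.1 j.2 else Eps psi h)))); last first.
  by move=> j _; rewrite Hc E ffunE eqxx; ring.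
rewrite -mulr_sumr -(pair_bigA _ (fun a b => (a == b)%:R * Vf (fun h => if h == h0 then delta_mx a b else Eps psi h))) /=.
have E2 a : \sum_b (a == b)%:R * Vf (fun h => if h == h0 then delta_mx a b else Eps psi h)
    = Vf (fun h => if h == h0 then delta_mx a a else Eps psi h).
  rewrite (eq_bigr (fun b => (b == a)%:R * Vf (fun h => if h == h0 then delta_mx a b else Eps psi h))).
    by rewrite sum_pick.
  by move=> b _; rewrite eq_sym.
by rewrite (eq_bigr _ (fun a _ => E2 a)) Vf_lin -mx1_sum_delta Vf_one mulr0.
Qed.

Definition K' (al be : J) : rat := ((al.1 == be.2) && (al.2 == be.1))%:R.
Definition Dg (al : J) : rat := (al.1 == al.2)%:R.

Lemma KcE' al be : Kc al be = K' al be - N%:R^-1 * Dg al * Dg be.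
Proof. by rewrite KcE /K' /Dg -mulrA -natrM; case: (al.1 == al.2); case: (be.1 == be.2). Qed.

Definition indep (c : {ffun halfedge v -> J} -> rat) (A : {set halfedge v}) :=
  forall psi psi' : {ffun halfedge v -> J}, (forall h, h \notin A -> psi h = psi' h) -> c psi = c psi'.

Lemma KillInd k : forall (A : {set halfedge v}), #|A| = k -> (forall h, h \in A -> ep e h) ->
  forall c, indep c A ->
  \sum_psi Vf (Eps psi) * (c psi * \prod_(h in A) Kc (psi h) (psi (e h))) =
  \sum_psi Vf (Eps psi) * (c psi * \prod_(h in A) K' (psi h) (psi (e h))).
Proof.
elim: k => [|k IH] A cA Aep c Hc.
  have -> : A = set0 by apply/eqP; rewrite -cards_eq0 cA.
  by apply: eq_bigr => psi _; rewrite !big_set0.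
have [h0 h0A] : exists h0, h0 \in A by apply/set0Pn; rewrite -card_gt0 cA.
set A' := A :\ h0.
have cA' : #|A'| = k by have := cardsD1 h0 A; rewrite h0A cA /A'; lia.
have inA' h : h \in A' = (h != h0) && (h \in A) by rewrite /A' in_setD1.
have eh0 : e h0 \notin A.
  by apply/negP => /Aep; apply/negP; apply: (ep_nand einv); apply: Aep.
have splitA (F : halfedge v -> rat) : \prod_(h in A) F h = F h0 * \prod_(h in A') F h.
  by rewrite (bigD1 h0) //=; congr (_ * _); apply: eq_bigl => h; rewrite inA' andbC.
rewrite (eq_bigr (fun psi => Vf (Eps psi) * ((c psi * Kc (psi h0) (psi (e h0))) *
   \prod_(h in A') Kc (psi h) (psi (e h))))); last by move=> psi _; rewrite splitA !mulrA.
rewrite IH //; first last.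
- move=> p1 p2 Hp; congr (_ * _).
    by apply: Hc => h hA; apply: Hp; rewrite inA' negb_and hA orbT.
  rewrite (Hp h0) ?(Hp (e h0)) //; first by rewrite inA' negb_and (negbTE eh0) orbT.
  by rewrite inA' eqxx.
- by move=> h; rewrite inA' => /andP [_ /Aep].
rewrite [RHS](eq_bigr (fun psi => Vf (Eps psi) * ((c psi * K' (psi h0) (psi (e h0))) *
   \prod_(h in A') K' (psi h) (psi (e h))))); last by move=> psi _; rewrite splitA !mulrA.
rewrite (eq_bigr (fun psi => Vf (Eps psi) * ((c psi * K' (psi h0) (psi (e h0))) *
   \prod_(h in A') K' (psi h) (psi (e h))) - Vf (Eps psi) * ((N%:R^-1 * c psi *
   Dg (psi (e h0)) * \prod_(h in A') K' (psi h) (psi (e h))) *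
   ((psi h0).1 == (psi h0).2)%:R))); last by move=> psi _; rewrite KcE' /Dg; ring.
rewrite sumrB Kill ?subr0 // => psi j.
have ne h : h \in A -> h != h0 -> upd psi h0 j h = psi h.
  by move=> _ /negbTE hh; rewrite ffunE hh.
rewrite (Hc (upd psi h0 j) psi); last first.
  by move=> h hA; rewrite ffunE; case: eqP => // E; move: hA; rewrite E h0A.
rewrite ffunE (negbTE (efix h0)); congr (_ * _).
apply: eq_bigr => h; rewrite inA' => /andP [hh0 hA]; rewrite !ffunE (negbTE hh0).
case: eqP => // E; move: (Aep _ hA); rewrite -(einv h) E.
by move=> H; move: (ep_nand einv (Aep _ h0A)); rewrite H.
Qed.

Lemma W_K' : W_sl N e = \sum_(psi : {ffun halfedge v -> J})
   Vf (Eps psi) * \prod_(h | ep e h) K' (psi h) (psi (e h)).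
Proof.
rewrite (@Wexp n v e einv efix).
have Aep : forall h, h \in [set h | ep e h] -> ep e h by move=> h; rewrite inE.
have H := @KillInd #|[set h | ep e h]| [set h | ep e h] erefl Aep (fun _ => 1) (fun _ _ _ => erefl).
have conv (F : halfedge v -> rat) :
  \prod_(h | ep e h) F h = 1 * \prod_(h in [set h | ep e h]) F h.
  by rewrite mul1r; apply: eq_bigl => h; rewrite inE.
under eq_bigr do rewrite conv.
under [RHS]eq_bigr do rewrite conv.
exact: H.
Qed.

End Kill.

Lemma sum_card (T : finType) (P : pred T) : \sum_(x : T) (P x)%:R = (#|[set x | P x]|)%:R :> rat.
Proof.
rewrite -natr_sum; congr (_%:R); rewrite -sum1_card.
rewrite [RHS]big_mkcond; apply: eq_bigr => x _; rewrite inE; by case: (P x).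
Qed.

Section Count2.
Variable n : nat.
Local Notation N := n.+2.
Local Notation J := ('I_N * 'I_N)%type.
Variables (v : nat) (e : halfedge v -> halfedge v).
Hypothesis einv : involutive e.
Hypothesis efix : forall h, e h != h.

Lemma W_count : W_sl N e =
  \sum_(S : {ffun 'I_v -> bool}) sgnS S * (N%:R ^+ #|porbits (sigP einv S)|).
Proof.
rewrite (@W_K' n v e einv efix).
under eq_bigr do rewrite VE mulr_suml.
rewrite exchange_big; apply: eq_bigr => S _.
under eq_bigr do rewrite -mulrA.
rewrite -mulr_sumr; congr (_ * _).
under eq_bigr do rewrite mulr_suml.
rewrite exchange_big /=.
have H1 (Rf : {ffun halfedge v -> 'I_N}) :
  \sum_(psi : {ffun halfedge v -> J}) (\prod_h Eps psi h (Rf h) (Rf (rho S h))) *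
     \prod_(h | ep e h) K' (psi h) (psi (e h)) =
  \prod_h ((Rf (sigP einv S h) == Rf h))%:R.
  pose psiR : {ffun halfedge v -> J} := [ffun h => (Rf h, Rf (rho S h))].
  rewrite (eq_bigr (fun psi : {ffun halfedge v -> J} => (psi == psiR)%:R *
      \prod_(h | ep e h) K' (psi h) (psi (e h)))); last first.
    move=> psi _; congr (_ * _).
    rewrite (eq_bigr (fun h => (psi h == psiR h)%:R)); last first.
      move=> h _; rewrite /Eps mxE /psiR ffunE; case: (psi h) => a b /=.
      by rewrite xpair_eqE (eq_sym a) (eq_sym b).
    rewrite prod_bool; have -> // : [forall h, psi h == psiR h] = (psi == psiR).
    apply/forallP/eqP => [H|->] //; apply/ffunP => h; exact/eqP.
  rewrite sum_pick (RG einv efix); apply: eq_bigr => h _.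
  rewrite /K' /psiR !ffunE /= !permE /sigF einv -natrM mulnb.
  by rewrite (eq_sym (Rf h)) (eq_sym (Rf (rho S h))).
rewrite (eq_bigr _ (fun Rf _ => H1 Rf)).
under eq_bigr do rewrite prod_bool.
by rewrite sum_card card_inv natrX.
Qed.

End Count2.

Theorem mainTheorem1 (v : nat) (e : halfedge v -> halfedge v) :
  is_oriented_trivalent e -> tg_connected e ->
  exists p : {poly rat},
    (size p <= v./2 + 3)%N /\
    (forall N : nat, (2 <= N)%N -> W_sl N e = p.[N%:R]).
Proof.
move=> [einv efix] Hc.
exists (\sum_(S : {ffun 'I_v -> bool}) sgnS S *: 'X^(#|porbits (sigP einv S)|)).
split.
  apply: leq_trans (size_sum _ _ _) _.
  apply/bigmax_leqP => S _.
  apply: leq_trans (size_scale_leq _ _) _; rewrite size_polyXn.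
  have := cycles_bound einv efix S Hc; lia.
move=> N; case: N => [|[|n]] // _.
rewrite (@W_count n v e einv efix) horner_sum; apply: eq_bigr => S _.
by rewrite hornerZ hornerXn.
Qed.
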